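(* Let $G$ be a finite solvable group of order $n$ and $H$ be a subgroup of $G$ of order $d$. Then $$d_{L(G)^*}(H)\leq d+\frac{n}{d}-2.$$ Moreover, equality holds if and only if $H$ is normal in $G$ and both $H$ and $G/H$ are elementary abelian $2$-groups.
   Context: The subgroup graph $L(G)^*$ of a finite group $G$ is the simple undirected graph whose vertices are the subgroups of $G$, two subgroups $H_1,H_2$ being adjacent iff one is a maximal subgroup of the other (i.e. $H_1<H_2$ with no subgroup strictly between them, or vice versa). $d_{L(G)^*}(H)$ denotes the degree of $H$ in this graph, i.e. the number of maximal subgroups of $H$ plus the number of subgroups $K\leq G$ containing $H$ as a maximal subgroup. The trivial group counts as an elementary abelian $2$-group. *)

(* Defs.v *)
From mathcomp Require Import all_boot all_fingroup all_solvable.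
Set Implicit Arguments. Unset Strict Implicit. Unset Printing Implicit Defensive.
Local Open Scope group_scope.

(* Degree of the subgroup H in the subgroup graph L(G)^* :
   number of maximal subgroups of H plus number of subgroups K of G
   having H as a maximal subgroup. *)
Definition subgraph_deg (gT : finGroupType) (G H : {group gT}) : nat :=
  #|[set M : {group gT} | maximal M H]|
  + #|[set K : {group gT} | (K \subset G) && maximal H K]|.

(* Main.v *)
Require Import Defs.
From mathcomp Require Import all_boot all_fingroup all_solvable.
From mathcomp Require Import zify.
Local Open Scope group_scope.

Module Aux.
Set Implicit Arguments. Unset Strict Implicit. Unset Printing Implicit Defensive.
Import GroupScope.



Lemma maxI (gT : finGroupType) (H K M : {group gT}) :
  maximal H K -> H \subset M -> M \subset K -> M :=: H \/ M :=: K.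
Proof.
case/maxgroupP=> [/andP[sHK _] mx] sHM sMK.
have [-> | pMK] := eqVproper sMK; first by right.
by left; rewrite (mx M).
Qed.

Lemma maximal_proper (gT : finGroupType) (H K : {group gT}) :
  maximal H K -> H \proper K.
Proof. by case/maxgroupP. Qed.

Section Covers.
Variables (gT : finGroupType) (G H : {group gT}).
Hypothesis sHG : H \subset G.

Let X := [set K : {group gT} | (K \subset G) && maximal H K].
Let P := [set (gval K :\: H) | K in X].

Lemma covX_inj : {in X &, injective (fun K : {group gT} => gval K :\: H)}.
Proof.
move=> K1 K2; rewrite !inE => /andP[_ /maximal_proper/proper_sub s1]
  /andP[_ /maximal_proper/proper_sub s2] e.
apply: val_inj => /=.
by rewrite -(setID K1 H) -(setID K2 H) e (setIidPr s1) (setIidPr s2).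
Qed.

Lemma covX_triv : trivIset P.
Proof.
apply/trivIsetP=> _ _ /imsetP[K1 XK1 ->] /imsetP[K2 XK2 ->] neq.
apply/pred0P=> x /=; apply/negP=> /andP[/setDP[K1x nHx] /setDP[K2x _]].
move: XK1 XK2; rewrite !inE => /andP[_ m1] /andP[_ m2].
have sH12 : H \subset K1 :&: K2.
  by rewrite subsetI (proper_sub (maximal_proper m1)) (proper_sub (maximal_proper m2)).
have [e1|e1] := maxI m1 sH12 (subsetIl _ _).
  by move: nHx; rewrite -e1 inE K1x K2x.
have [e2|e2] := maxI m2 sH12 (subsetIr _ _).
  by move: nHx; rewrite -e2 inE K1x K2x.
by move: neq; rewrite -e1 e2 eqxx.
Qed.

Lemma covX_cover : cover P \subset G :\: H.
Proof.
apply/bigcupsP=> _ /imsetP[K XK ->]; move: XK; rewrite inE => /andP[sKG _].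
by apply: setSD.
Qed.

Lemma covX_sum : \sum_(K in X) (#|K| - #|H|) = #|cover P|.
Proof.
have /eqP <- := covX_triv.
rewrite big_imset /=; last exact: covX_inj.
apply: eq_bigr => K; rewrite inE => /andP[_ /maximal_proper/proper_sub sHK].
by rewrite cardsD (setIidPr sHK).
Qed.

Lemma covX_term K : K \in X -> #|H| <= #|K| - #|H|.
Proof.
rewrite inE => /andP[_ /maximal_proper pHK].
rewrite leq_subRL ?subset_leq_card ?proper_sub // addnn -mul2n.
rewrite -(Lagrange (proper_sub pHK)) mulnC leq_pmul2l ?cardG_gt0 //.
by rewrite indexg_gt1 proper_subn.
Qed.

Lemma covers_le : #|X| * #|H| <= #|G| - #|H|.
Proof.
apply: leq_trans (_ : \sum_(K in X) (#|K| - #|H|) <= _).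
  by rewrite -sum_nat_const; apply: leq_sum => K /covX_term.
rewrite covX_sum; apply: leq_trans (subset_leq_card covX_cover) _.
by rewrite cardsD (setIidPr sHG).
Qed.

Lemma sum_eq_const (T : finType) (A : {pred T}) (f : T -> nat) c :
  (forall x, x \in A -> c <= f x) -> \sum_(x in A) f x <= #|A| * c ->
  forall x, x \in A -> f x = c.
Proof.
move=> ge le x Ax; apply/eqP; rewrite eqn_leq ge // andbT.
move: le; rewrite (bigD1 x) //= (cardD1 x A) Ax.
have : #|[predD1 A & x]| * c <= \sum_(i | (i \in A) && (i != x)) f i.
  rewrite -sum_nat_const.
  rewrite (eq_bigl (fun i => (i \in A) && (i != x))); last by move=> i; rewrite !inE andbC.
  by apply: leq_sum => i /andP[Ai _]; exact: ge.
move=> h1 h2; nia.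
Qed.

Lemma covX_idx2 K : K \in X -> #|K| - #|H| = #|H| -> #|K : H| = 2.
Proof.
rewrite inE => /andP[_ /maximal_proper/proper_sub sHK] e.
have L := Lagrange sHK; have h := cardG_gt0 H; nia.
Qed.

Lemma covers_eq : #|X| = #|G : H| - 1 <-> H <| G /\ 2.-abelem (G / H).
Proof.
have LG := Lagrange sHG; have h0 := cardG_gt0 H.
split=> [eX | [nHG ab]].
  have eXH : (#|X| * #|H| = #|G| - #|H|)%N by rewrite eX; nia.
  have le1 : \sum_(K in X) (#|K| - #|H|) <= #|X| * #|H|.
    rewrite covX_sum eXH; apply: leq_trans (subset_leq_card covX_cover) _.
    by rewrite cardsD (setIidPr sHG).
  have eK := sum_eq_const covX_term le1.
  have ecov : cover P = G :\: H.
    apply/eqP; rewrite eqEcard covX_cover /= -covX_sum.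
    rewrite cardsD (setIidPr sHG) -eXH -sum_nat_const.
    by rewrite (eq_bigr _ eK).
  have inK g : g \in G -> g \notin H ->
      exists2 K : {group gT}, K \in X & (g \in K) && (#|K : H| == 2).
    move=> Gg nHg; have : g \in cover P by rewrite ecov inE nHg.
    case/bigcupP=> _ /imsetP[K XK ->] /setDP[Kg _].
    by exists K => //; rewrite Kg (covX_idx2 XK (eK K XK)) eqxx.
  have nHG : H <| G.
    rewrite /normal sHG; apply/subsetP=> g Gg.
    have [Hg | nHg] := boolP (g \in H); first by rewrite (subsetP (normG H)).
    have [K XK /andP[Kg /eqP iK]] := inK g Gg nHg.
    have sHK : H \subset K.
      by move: XK; rewrite inE => /andP[_ /maximal_proper/proper_sub].
    by have /andP[_ /subsetP->] := index2_normal sHK iK.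
  split=> //; apply: exponent2_abelem; apply/exponentP=> _ /morphimP[g Ng Gg ->].
  have [Hg | nHg] := boolP (g \in H); first by rewrite /= coset_id // expg1n.
  have [K XK /andP[Kg /eqP iK]] := inK g Gg nHg.
  have sHK : H \subset K.
    by move: XK; rewrite inE => /andP[_ /maximal_proper/proper_sub].
  have /andP[_ sKN] := index2_normal sHK iK.
  by rewrite -iK -card_quotient // expg_cardG // mem_quotient.
have nHG' : G \subset 'N(H) by case/andP: nHG.
have [_ expH] := abelemP (isT : prime 2) ab.
pose Kg g := (H <*> <[g]>)%G.
have Kgprop g : g \in G -> g \notin H ->
    [/\ Kg g \in X, g \in Kg g, Kg g \subset G & #|Kg g : H| = 2].
  move=> Gg nHg.
  have Ng : g \in 'N(H) by apply: (subsetP nHG').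
  have sKG : Kg g \subset G by rewrite join_subG sHG cycle_subG.
  have sKN : Kg g \subset 'N(H) by rewrite join_subG normG cycle_subG.
  have iK : #|Kg g : H| = 2.
    rewrite -card_quotient // quotientYidl ?cycle_subG // quotient_cycle //.
    rewrite -/(order _).
    have d : #[coset H g] %| 2 by rewrite order_dvdn expH ?mem_quotient.
    have n1 : (#[coset H g] != 1)%N.
      by rewrite order_eq1; apply: contra nHg => /eqP; apply: coset_idr.
    have := dvdn_leq (isT : 0 < 2) d; have := order_gt0 (coset H g).
    move: n1; lia.
  split=> //; last first.
  - by apply: (subsetP (joing_subr _ _)); apply: cycle_id.
  by rewrite inE sKG p_index_maximal ?joing_subl // iK.
have eK : forall K, K \in X -> #|K| - #|H| = #|H|.
  move=> K XK; move: (XK); rewrite inE => /andP[sKG mK].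
  have [sHK [g gK nHg]] := properP (maximal_proper mK).
  have [_ _ _ iK] := Kgprop g (subsetP sKG g gK) nHg.
  have sKgK : Kg g \subset K by rewrite join_subG sHK cycle_subG.
  have [e|e] := maxI mK (joing_subl _ _) sKgK.
    by move: nHg; rewrite -e; rewrite (subsetP (joing_subr _ _)) ?cycle_id.
  have iK2 : #|K : H| = 2 by rewrite -e.
  have LK := Lagrange sHK; rewrite iK2 in LK; nia.
have ecov : cover P = G :\: H.
  apply/eqP; rewrite eqEcard covX_cover /=; apply: subset_leq_card.
  apply/subsetP=> g /setDP[Gg nHg]; have [XK gK _ _] := Kgprop g Gg nHg.
  by apply/bigcupP; exists (gval (Kg g) :\: H); [apply: imset_f | rewrite inE nHg].
have : (#|X| * #|H| = #|G| - #|H|)%N.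
  rewrite -sum_nat_const -(eq_bigr _ eK) covX_sum ecov cardsD (setIidPr sHG).
  by [].
nia.
Qed.

End Covers.


Lemma join_cycle_idx2 (gT : finGroupType) (L : {group gT}) y :
  y \in 'N(L) -> y ^+ 2 \in L -> y \notin L -> #|L <*> <[y]> : L| = 2.
Proof.
move=> Ny y2 nLy.
have sKN : L <*> <[y]> \subset 'N(L) by rewrite join_subG normG cycle_subG.
rewrite -card_quotient // quotientYidl ?cycle_subG // quotient_cycle //.
rewrite -/(order _).
have d : #[coset L y] %| 2 by rewrite order_dvdn -morphX //= coset_id.
have n1 : (#[coset L y] != 1)%N.
  by rewrite order_eq1; apply: contra nLy => /eqP; apply: coset_idr.
have := dvdn_leq (isT : 0 < 2) d; have := order_gt0 (coset L y).
move: n1; lia.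
Qed.

Lemma arith2 a b m : (0 < a -> a * 2 = b -> a - 1 <= m -> b - 1 <= true + (m + m))%N.
Proof. move=> /= *; lia. Qed.

Definition mx (gT : finGroupType) (G : {group gT}) :=
  [set M : {group gT} | maximal M G].

Lemma abelem2_lower n : forall (gT : finGroupType) (E : {group gT}),
  #|E| < n -> 2.-abelem E -> #|E| - 1 <= #|mx E|.
Proof.
elim: n => // n IH gT E ltE ab.
have [abE expE] := abelemP (isT : prime 2) ab.
have pE := abelem_pgroup ab.
have [e1 | [M0 mM0 _]] := maximal_exists (sub1G E).
  by rewrite -e1 cards1.
have pM0 := maximal_proper mM0; have sM0E := proper_sub pM0.
have iM0 : #|E : M0| = 2 := p_maximal_index pE mM0.
have [_ [z Ez nM0z]] := properP pM0.
have NE : forall y, y \in E -> forall L : {group gT}, L \subset E -> y \in 'N(L).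
  move=> y Ey L sLE; apply: (subsetP (cent_sub L)).
  by apply: (subsetP (centS sLE)); apply: (subsetP abE).
have key : forall (L : {group gT}) y, maximal L M0 -> y \in E -> y \notin M0 ->
    maximal (L <*> <[y]>) E /\ (L <*> <[y]>) :&: M0 = L.
  move=> L y mL Ey nM0y.
  have sLM0 := proper_sub (maximal_proper mL).
  have sLE := subset_trans sLM0 sM0E.
  have nLy : y \notin L by apply: contra nM0y; apply: (subsetP sLM0).
  have y2 : y ^+ 2 \in L by rewrite expE ?group1.
  have i2 := join_cycle_idx2 (NE y Ey L sLE) y2 nLy.
  have iL : #|M0 : L| = 2 := p_maximal_index (pgroupS sM0E pE) mL.
  have sKE : L <*> <[y]> \subset E by rewrite join_subG sLE cycle_subG.
  have e4 := Lagrange_index sM0E sLM0.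
  have e4' := Lagrange_index sKE (joing_subl L <[y]>).
  rewrite iM0 iL in e4; rewrite -e4 i2 in e4'.
  have iK : #|E : L <*> <[y]> | = 2.
    by apply/eqP; rewrite -(eqn_pmul2r (isT : 0 < 2)) e4'.
  split; first by rewrite p_index_maximal // iK.
  have sLK : L \subset (L <*> <[y]>) :&: M0 by rewrite subsetI joing_subl sLM0.
  have [// | eM] := maxI mL sLK (subsetIr _ _).
  exfalso; have sM0K : M0 \subset L <*> <[y]> by rewrite -eM subsetIl.
  have : #|E : M0| = #|E : L <*> <[y]>| by rewrite iM0 iK.
  move=> ei; have eK : (L <*> <[y]>)%G = M0.
    have e5 : (#|L <*> <[y]>| * #|E : L <*> <[y]>| = #|M0| * #|E : M0|)%N.
      by rewrite (Lagrange sKE) (Lagrange sM0E).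
    rewrite iK iM0 in e5; move/eqP: e5; rewrite eqn_pmul2r // => /eqP e5.
    apply/eqP; rewrite eq_sym -val_eqE /= eqEcard sM0K /=.
    by rewrite e5.
  by move: nM0y; rewrite -eK /= (subsetP (joing_subr _ _)) ?cycle_id.
pose mL (L : {group gT}) := odflt 1 [pick m in M0 :\: L].
have mLP : forall L : {group gT}, maximal L M0 -> mL L \in M0 :\: L.
  move=> L mL0; have [_ [m M0m nLm]] := properP (maximal_proper mL0).
  rewrite /mL; case: pickP => [b // | none].
  by have := none m; rewrite inE nLm M0m.
have mLzP : forall L : {group gT}, maximal L M0 ->
    mL L * z \in E /\ mL L * z \notin M0.
  move=> L mL0; have /setDP[M0m _] := mLP L mL0.
  split; first by rewrite groupM // (subsetP sM0E).
  by rewrite (groupMl _ M0m).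
pose F1 (L : {group gT}) := (L <*> <[z]>)%G.
pose F3 (L : {group gT}) := (L <*> <[mL L * z]>)%G.
have F1P : forall L, L \in mx M0 -> F1 L \in mx E /\ F1 L :&: M0 = L.
  by move=> L; rewrite inE => mL0; rewrite inE; apply: key.
have F3P : forall L, L \in mx M0 -> F3 L \in mx E /\ F3 L :&: M0 = L.
  move=> L; rewrite inE => mL0; rewrite inE.
  by have [? ?] := mLzP L mL0; apply: key.
have inj1 : {in mx M0 &, injective F1}.
  move=> L1 L2 X1 X2 e; apply: val_inj => /=.
  by rewrite -(F1P L1 X1).2 -(F1P L2 X2).2 e.
have inj3 : {in mx M0 &, injective F3}.
  move=> L1 L2 X1 X2 e; apply: val_inj => /=.
  by rewrite -(F3P L1 X1).2 -(F3P L2 X2).2 e.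
pose S1 := [set F1 L | L in mx M0].
pose S3 := [set F3 L | L in mx M0].
have zF1 : forall L, z \in F1 L.
  by move=> L; rewrite /= (subsetP (joing_subr _ _)) ?cycle_id.
have nzF3 : forall L, L \in mx M0 -> z \notin F3 L.
  move=> L X; apply/negP => zF.
  have mLin : mL L * z \in F3 L by rewrite /= (subsetP (joing_subr _ _)) ?cycle_id.
  have : mL L \in F3 L :&: M0.
    rewrite inE -{1}(mulgK z (mL L)) groupM ?groupV //.
    by move: X; rewrite inE => /mLP /setDP[].
  by rewrite (F3P L X).2; move: X; rewrite inE => /mLP /setDP[_ /negP].
have tS13 : S1 :&: S3 = set0.
  apply/setP=> K; rewrite !inE; apply/negP => /andP[/imsetP[L1 _ ->] /imsetP[L2 X2 e]].
  by move: (zF1 L1); rewrite e; apply/negP; apply: nzF3.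
have nM0 : M0 \notin S1 :|: S3.
  rewrite inE negb_or; apply/andP; split.
    by apply/negP => /imsetP[L _ e]; move: nM0z; rewrite e zF1.
  apply/negP => /imsetP[L X e].
  have := (F3P L X).2; rewrite -e setIid => eL.
  by move: X; rewrite inE -eL => /maximal_proper; rewrite properE subxx.
have sub : M0 |: (S1 :|: S3) \subset mx E.
  apply/subsetP=> K; rewrite !inE => /orP[/eqP -> // | /orP[] /imsetP[L X ->]].
    by have [] := F1P L X; rewrite inE.
  by have [] := F3P L X; rewrite inE.
apply: leq_trans (subset_leq_card sub).
rewrite cardsU1 nM0 cardsU tS13 cards0 subn0 !card_in_imset //.
have ltM0 : #|M0| < n := leq_trans (proper_card pM0) ltE.
have := IH gT M0 ltM0 (abelemS sM0E ab).
have := Lagrange sM0E; rewrite iM0; have := cardG_gt0 M0.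
exact: arith2.
Qed.


Section Scount.
Variables (gT : finGroupType) (H A : {group gT}).
Hypotheses (mnA : minnormal A H) (abA : abelian A) (sAH : A \subset H).

Lemma mn_min (Y : {group gT}) : Y \subset A -> H \subset 'N(Y) -> Y :=: 1 \/ Y :=: A.
Proof.
case/mingroupP: mnA => _ m sYA nYH.
have [-> | nY] := eqsVneq Y 1; [by left | right].
by rewrite (m Y) //= nY.
Qed.

Lemma nAH : A <| H.
Proof. by case/mingroupP: mnA => /andP[_ ?] _; rewrite /normal sAH. Qed.

Definition S (C B : {group gT}) := [set D : {group gT} |
  [&& D <| H, C \subset D, D \subset A <*> B, D :&: A == 1 & #|D| == #|B|]].

Lemma cardAB (B : {group gT}) : B \subset 'C(A) -> A :&: B = 1 ->
  A <*> B = A * B /\ #|A <*> B| = (#|A| * #|B|)%N.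
Proof.
move=> cAB tAB; have e : A <*> B = A * B by rewrite cent_joinEr.
by split=> //; rewrite e TI_cardMg.
Qed.

Lemma key_card (B D : {group gT}) : B \subset 'C(A) -> A :&: B = 1 ->
  D \subset A <*> B -> D :&: A = 1 -> #|D| = #|B| -> A <*> D = A <*> B.
Proof.
move=> cAB tAB sD tDA cD.
have cAABs : A <*> B \subset 'C(A) by rewrite join_subG cAB andbT; exact: abA.
have cAD : D \subset 'C(A) := subset_trans sD cAABs.
have [eB cB] := cardAB cAB tAB.
have [eD cD2] := cardAB cAD (etrans (setIC _ _) tDA).
apply/eqP; rewrite eqEcard cD2 cB cD leqnn andbT.
by rewrite join_subG joing_subl.
Qed.

Lemma S_base (C B : {group gT}) : C :=: B -> #|S C B| <= #|B : C|.
Proof.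
move=> eCB; rewrite eCB indexgg.
have : S C B \subset [set B].
  apply/subsetP=> D; rewrite !inE => /and5P[_ sCD _ _ /eqP cD].
  by rewrite eq_sym -val_eqE /= eqEcard -{1}eCB sCD cD leqnn.
by move/subset_leq_card; rewrite cards1.
Qed.

Lemma cAAW (B : {group gT}) : B \subset 'C(A) -> A <*> B \subset 'C(A).
Proof. by move=> cAB; rewrite join_subG cAB andbT; exact: abA. Qed.

Lemma S_min (C W : {group gT}) :
  W <| H -> C <| H -> C \proper W -> A :&: W = 1 -> W \subset 'C(A) ->
  (forall Y : {group gT}, Y <| H -> C \subset Y -> Y \subset W ->
     Y :=: C \/ Y :=: W) ->
  #|S C W| <= #|W : C|.
Proof.
move=> nWH nCH pCW tAW cAW minW.
have [sCW _] := andP pCW.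
have [eAW cAW2] := cardAB cAW tAW.
have hA := cardG_gt0 A; have hC := cardG_gt0 C.
have minD : forall D : {group gT}, D \in S C W ->
    forall Y : {group gT}, Y <| H -> C \subset Y -> Y \subset D ->
    Y :=: C \/ Y :=: D.
  move=> D; rewrite inE => /and5P[nDH sCD sDAW /eqP tDA /eqP cD] Y nYH sCY sYD.
  have tYA : Y :&: A = 1 by apply/trivgP; rewrite -tDA setSI.
  have cYA : Y \subset 'C(A) := subset_trans sYD (subset_trans sDAW (cAAW cAW)).
  have [eYA cYA2] := cardAB cYA (etrans (setIC _ _) tYA).
  pose Z := ((A <*> Y) :&: W)%G.
  have nZH : Z <| H by rewrite normalI ?normalY ?nAH.
  have sCZ : C \subset Z by rewrite subsetI sCW (subset_trans sCY) ?joing_subr.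
  have sYAW : A <*> Y \subset A <*> W.
    by rewrite join_subG joing_subl (subset_trans sYD sDAW).
  case: (minW Z nZH sCZ (subsetIr _ _)) => eZ.
    left; have eAC : A <*> Y = A * C.
      rewrite -eZ /= setIC group_modl ?joing_subl // -eAW.
      by apply/esym/setIidPr.
    have := mul_cardG A C; rewrite -eAC cYA2 => e1.
    have : #|Y| <= #|C|.
      rewrite -(leq_pmul2l hA) e1 leq_pmulr //.
    move=> le; apply/eqP; rewrite eq_sym eqEcard sCY le.
    by [].
  right; have sWAY : W \subset A <*> Y by rewrite -eZ subsetIl.
  have : A <*> W \subset A <*> Y by rewrite join_subG joing_subl sWAY.
  move/subset_leq_card; rewrite cAW2 cYA2 leq_pmul2l // -cD => le.
  by apply/eqP; rewrite eqEcard sYD le.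
have [_ [w0 Ww0 nCw0]] := properP pCW.
pose f (D : {group gT}) := odflt 1 [pick a in A | w0 * a \in D].
have fP : forall D, D \in S C W -> f D \in A /\ w0 * f D \in D.
  move=> D SD; move: (SD); rewrite inE => /and5P[nDH sCD sDAW /eqP tDA /eqP cD].
  have cDA : D \subset 'C(A) := subset_trans sDAW (cAAW cAW).
  have eK := key_card cAW tAW sDAW tDA cD.
  have : w0 \in D * A.
    by rewrite -cent_joinEl // joingC eK (subsetP (joing_subr _ _)).
  case/mulsgP=> d a Dd Aa e.
  rewrite /f; case: pickP => [b /andP[Ab Db] | none] /=; first by [].
  have := none a^-1; rewrite groupV Aa /= e mulgK Dd //.
have finj : {in S C W &, injective f}.
  move=> D1 D2 S1 S2 e.
  have [_ D1y] := fP D1 S1; have [A2 D2y] := fP D2 S2; rewrite e in D1y.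
  have nCy : w0 * f D2 \notin C.
    apply: contra nCw0 => Cy.
    have : f D2 \in A :&: W.
      by rewrite inE A2 -(mulKg w0 (f D2)) groupMl ?groupV // (subsetP sCW).
    by rewrite tAW => /set1P e1; move: Cy; rewrite e1 mulg1.
  move: (S1) (S2); rewrite !inE => /and5P[nD1 sC1 _ _ /eqP c1] /and5P[nD2 sC2 _ _ /eqP c2].
  have sC12 : C \subset D1 :&: D2 by rewrite subsetI sC1 sC2.
  have [e2 | e2] := minD D1 S1 (D1 :&: D2)%G (normalI nD1 nD2) sC12 (subsetIl _ _).
    by move: nCy; rewrite -e2 inE D1y D2y.
  apply: val_inj => /=; apply/eqP; rewrite eqEcard c1 c2 leqnn andbT.
  by rewrite -e2 subsetIr.
have [sub | nsub] := boolP (S C W \subset [set W]).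
  apply: leq_trans (subset_leq_card sub) _; rewrite cards1.
  by rewrite indexg_gt0.
have leA : #|S C W| <= #|A|.
  rewrite -(card_in_imset finj); apply: subset_leq_card.
  by apply/subsetP=> _ /imsetP[D SD ->]; case: (fP D SD).
apply: leq_trans leA _.
case/subsetPn: nsub => D SD; rewrite inE => nDW.
move: (SD); rewrite inE => /and5P[nDH sCD sDAW /eqP tDA /eqP cD].
have nWD : D \subset 'N(W) := subset_trans (normal_sub nDH) (normal_norm nWH).
have eDW : D :&: W = C.
  have sCDW : C \subset D :&: W by rewrite subsetI sCD sCW.
  have [e | e] := minD D SD (D :&: W)%G (normalI nDH nWH) sCDW (subsetIl _ _).
    by [].
  exfalso; move: nDW; rewrite -val_eqE /=.
  have sDW : D \subset W by rewrite -e subsetIr.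
  by rewrite eqEcard sDW cD leqnn.
have [e | e] := mn_min (subsetIr (D <*> W) A)
  (normal_norm (normalI (normalY nDH nWH) nAH)).
  exfalso; have sDWAW : D <*> W \subset A <*> W by rewrite join_subG sDAW joing_subr.
  have tDWA : (D <*> W)%G :&: A = 1 by [].
  have cDW : D <*> W \subset 'C(A) := subset_trans sDWAW (cAAW cAW).
  have [e3 c3] := cardAB cDW (etrans (setIC _ _) tDWA).
  have : A <*> (D <*> W) \subset A <*> W by rewrite join_subG joing_subl sDWAW.
  move/subset_leq_card; rewrite c3 cAW2 leq_pmul2l // => le.
  have eW : D <*> W = W.
    by apply/eqP; rewrite eq_sym eqEcard joing_subr le.
  move: nDW; rewrite -val_eqE /= eqEcard -{1}eW joing_subl cD leqnn //.
have sADW : A \subset D <*> W by rewrite -e subsetIl.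
have : A <*> W \subset D * W.
  by rewrite -norm_joinEl // join_subG sADW joing_subr.
move/subset_leq_card; rewrite cAW2 => le.
have := mul_cardG D W; rewrite eDW cD => e2.
rewrite -divgS // leq_divRL //.
have : (#|A| * #|W| * #|C| <= #|W| * #|W|)%N by rewrite e2 leq_mul2r le orbT.
rewrite mulnAC leq_pmul2r ?cardG_gt0 //.
Qed.

Lemma arith1 b c w n : (b - c < n.+1 -> c < w -> w <= b -> b - w < n)%N.
Proof. lia. Qed.

Lemma S_count n : forall C B : {group gT}, (#|B| - #|C| < n)%N ->
  B <| H -> C <| H -> C \subset B -> A :&: B = 1 -> B \subset 'C(A) ->
  #|S C B| <= #|B : C|.
Proof.
elim: n => // n IH C B lt nBH nCH sCB tAB cAB.
have [eCB | pCB] := eqVproper sCB; first exact: S_base.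
pose gP := [pred W : {group gT} | (W <| H) && (C \proper W)].
have gPB : gP B by rewrite /= nBH pCB.
have [W /mingroupP[/andP[nWH pCW] minW'] sWB] := mingroup_exists gPB.
have sCW := proper_sub pCW.
have minW : forall Y : {group gT}, Y <| H -> C \subset Y -> Y \subset W ->
    Y :=: C \/ Y :=: W.
  move=> Y nYH sCY sYW; have [e | pCY] := eqVproper sCY; first by left.
  by right; rewrite (minW' Y) // /= nYH pCY.
have tAW : A :&: W = 1 by apply/trivgP; rewrite -tAB setIS.
have cAW : W \subset 'C(A) := subset_trans sWB cAB.
have [eAW cAW2] := cardAB cAW tAW.
have hA := cardG_gt0 A.
pose p (D : {group gT}) := (D :&: (A <*> W))%G.
have pS : forall D, D \in S C B -> p D \in S C W.
  move=> D; rewrite !inE => /and5P[nDH sCD sDAB /eqP tDA /eqP cD].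
  have cDA : D \subset 'C(A) := subset_trans sDAB (cAAW cAB).
  have eK := key_card cAB tAB sDAB tDA cD.
  have tpA : (D :&: (A <*> W)) :&: A = 1.
    by apply/trivgP; rewrite -tDA setSI // subsetIl.
  rewrite normalI ?normalY ?nAH // subsetI sCD (subset_trans sCW) ?joing_subr //.
  rewrite subsetIr /= tpA eqxx /=.
  have e1 : A * (D :&: (A <*> W)) = A <*> W.
    rewrite group_modl ?joing_subl // -cent_joinEr // eK.
    by apply/setIidPr; rewrite join_subG joing_subl (subset_trans sWB) ?joing_subr.
  have := TI_cardMg (etrans (setIC _ _) tpA); rewrite e1 cAW2 => e2.
  by rewrite -(eqn_pmul2l hA) e2.
rewrite -sum1_card (partition_big p (fun j => j \in S C W)) //=.
apply: leq_trans (_ : \sum_(j in S C W) #|B : W| <= _).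
  apply: leq_sum => D1 SD1; rewrite sum1dep_card.
  set F := [set _ | _].
  have [-> | ] := eqVneq F set0; first by rewrite cards0.
  case/set0Pn=> Ds; rewrite inE => /andP[SDs /eqP pDs].
  move: (SDs); rewrite inE => /and5P[nDsH sCDs sDsAB /eqP tDsA /eqP cDs].
  move: (SD1); rewrite inE => /and5P[nD1H sCD1 sD1AW /eqP tD1A /eqP cD1].
  have eKs := key_card cAB tAB sDsAB tDsA cDs.
  have sD1Ds : D1 \subset Ds by rewrite -pDs subsetIl.
  have sub : F \subset S D1 Ds.
    apply/subsetP=> D; rewrite !inE => /andP[/and5P[nDH sCD sDAB /eqP tDA /eqP cD] /eqP pD].
    by rewrite nDH -pD subsetIl eKs sDAB tDA cD cDs !eqxx.
  apply: leq_trans (subset_leq_card sub) _.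
  have -> : #|B : W| = #|Ds : D1| by rewrite -!divgS // cDs cD1.
  apply: IH => //.
  - by rewrite cDs cD1; apply: arith1 lt (proper_card pCW) (subset_leq_card sWB).
  - by rewrite setIC.
  - exact: subset_trans sDsAB (cAAW cAB).
rewrite sum_nat_const mulnC -(Lagrange_index sWB sCW) leq_mul2l.
by rewrite S_min ?orbT.
Qed.

End Scount.


Lemma pnat_neq (p q n : nat) : p != q -> p.-nat n -> q^'.-nat n.
Proof. by move=> npq; apply: sub_in_pnat => r _; rewrite !inE => /eqP ->. Qed.

Lemma mn_min' (gT : finGroupType) (H A Y : {group gT}) :
  minnormal A H -> Y \subset A -> H \subset 'N(Y) -> Y :=: 1 \/ Y :=: A.
Proof.
case/mingroupP => _ m sYA nYH.
have [-> | nY] := eqsVneq Y 1; [by left | right].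
by rewrite (m Y) //= nY.
Qed.

Lemma join_Sylow (gT : finGroupType) (q : nat) (X D S : {group gT}) :
  D \subset X -> S \subset 'N(D) -> q.-Sylow(X) S -> q.-nat #|X : D| ->
  D <*> S = X.
Proof.
move=> sDX nDS sylS qXD.
have /and3P[sSX _ q'XS] := sylS.
have sDSX : D <*> S \subset X by rewrite join_subG sDX sSX.
have e1 : (#|X : D <*> S| = 1)%N.
  apply: (@pnat_1 q).
    by apply: pnat_dvd qXD; apply: indexgS; apply: joing_subl.
  by apply: pnat_dvd q'XS; apply: indexgS; apply: joing_subr.
by rewrite (index1g sDSX e1).
Qed.

Section Fiber.
Variables (gT : finGroupType) (H N M1 M2 : {group gT}) (p : nat).
Hypotheses (solH : solvable H) (mnN : minnormal N H) (sNH : N \subset H).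
Hypotheses (pr_p : prime p) (abelN : p.-abelem N).
Hypothesis ncN : ~~ (H \subset 'C(N)).
Hypotheses (sM1H : M1 \subset H) (tM1 : M1 :&: N = 1)
           (cM1 : (#|M1| * #|N|)%N = #|H|).
Hypotheses (sM2H : M2 \subset H) (tM2 : M2 :&: N = 1)
           (cM2 : (#|M2| * #|N|)%N = #|H|).
Hypothesis eD : M1 :&: 'C(N) = M2 :&: 'C(N).

Lemma fiberC : exists2 n, n \in N & M2 :=: M1 :^ n.
Proof.
have nNHs : H \subset 'N(N) by case/mingroupP: mnN => /andP[].
have ntN : N :!=: 1 by case/mingroupP: mnN => /andP[].
have abN := abelem_abelian abelN; have pN := abelem_pgroup abelN.
have eHi (M : {group gT}) : M \subset H -> M :&: N = 1 ->
    (#|M| * #|N|)%N = #|H| -> M * N = H.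
  move=> sMH tMN cMN; apply/eqP; rewrite eqEcard mulG_subG sMH sNH /=.
  by rewrite TI_cardMg // cMN.
have eH1 := eHi M1 sM1H tM1 cM1; have eH2 := eHi M2 sM2H tM2 cM2.
have normH : forall X : {set gT}, M1 \subset 'N(X) -> N \subset 'N(X) ->
    H \subset 'N(X).
  by move=> X n1 n2; rewrite -eH1 mulG_subG n1 n2.
have nNM1 : M1 \subset 'N(N) := subset_trans sM1H nNHs.
pose D := (M1 :&: 'C(N))%G.
have sDM1 : D \subset M1 := subsetIl _ _.
have sDC : D \subset 'C(N) := subsetIr _ _.
have nDH : H \subset 'N(D).
  apply: normH; first by rewrite normsI ?normG ?norms_cent.
  by apply: subset_trans (cent_sub _); rewrite centsC.
have nDM1 : M1 \subset 'N(D) := subset_trans sM1H nDH.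
have nsDM1 : D <| M1 by rewrite /normal sDM1.
have cNM1 : ~~ (M1 \subset 'C(N)).
  by apply: contra ncN => c; rewrite -eH1 mulG_subG c; exact: abN.
have nsM1D : ~~ (M1 \subset D).
  by apply: contra cNM1 => s; apply: subset_trans s sDC.
have ntX : (M1 / D) :!=: 1.
  by apply: contra nsM1D => /eqP e; rewrite -(quotient_sub1 nDM1) e.
have [Yb mnY sYX] := minnormal_exists ntX (normG (M1 / D)).
have [nYX ntY abY] := minnormal_solvable mnY sYX (quotient_sol D (solvableS sM1H solH)).
have [q pr_q abelY] := is_abelemP abY.
have qY := abelem_pgroup abelY.
pose T := (coset D @*^-1 Yb)%G.
have sDT : D \subset T := sub_cosetpre Yb.
have nsTM1 : T <| M1 by rewrite -(quotientGK nsDM1) cosetpre_normal /normal sYX nYX.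
have sTM1 := normal_sub nsTM1; have nTM1 := normal_norm nsTM1.
have nDT : T \subset 'N(D) := subset_trans sTM1 nDM1.
have eTD : T / D = Yb := cosetpreK Yb.
have qTD : q.-nat #|T : D| by rewrite -card_quotient // eTD.
have nsTD : ~~ (T \subset D).
  apply: contra ntY => sTD; rewrite -eTD -subG1 quotient_sub1 //.
have nNT : T \subset 'N(N) := subset_trans sTM1 nNM1.
have cNT : N :&: 'C(T) = 1.
  have nY : H \subset 'N(N :&: 'C(T)).
    apply: normH; first by rewrite normsI ?norms_cent.
    apply: subset_trans (cent_sub _).
    exact: sub_abelian_cent abN (subsetIl _ _).
  have [e | e] := mn_min' mnN (subsetIl N 'C(T)) nY; first by [].
  exfalso; move/negP: nsTD; apply.
  rewrite subsetI sTM1 centsC -e subsetIr //.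
have qp : q != p.
  apply/eqP=> eqp; rewrite eqp in qTD.
  have [P sylP] := Sylow_exists p T.
  have sPT := pHall_sub sylP.
  have nDP : P \subset 'N(D) := subset_trans sPT nDT.
  have eT : D <*> P = T := join_Sylow sDT nDP sylP qTD.
  have pP := pHall_pgroup sylP.
  have nNP : P \subset 'N(N) := subset_trans sPT nNT.
  have pNP : p.-group (N <*> P) by rewrite norm_joinEr // pgroupM pN pP.
  have nsNNP : N <| N <*> P by rewrite /normal joing_subl join_subG normG nNP.
  have ne := meet_center_nil (pgroup_nil pNP) nsNNP ntN.
  have sub : N :&: 'Z(N <*> P) \subset N :&: 'C(T).
    rewrite subsetI subsetIl /= -eT centY subsetI; apply/andP; split.
      by apply: subset_trans (subsetIl _ _) _; rewrite centsC.
    apply: subset_trans (subsetIr _ _) _.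
    by apply: subset_trans (subsetIr _ _) (centS (joing_subr N P)).
  by move/eqP: ne; apply; apply/trivgP; rewrite -cNT.
have [S sylS] := Sylow_exists q T.
have sST := pHall_sub sylS.
have nDS : S \subset 'N(D) := subset_trans sST nDT.
have eTS : D <*> S = T := join_Sylow sDT nDS sylS qTD.
pose NT := (N <*> T)%G.
have eNT : N <*> T = N * T := norm_joinEr nNT.
have tNT : N :&: T = 1.
  by apply/trivgP; rewrite -tM1 /= setIC setSI.
have cNT2 : #|NT| = (#|N| * #|T|)%N by rewrite /= eNT TI_cardMg.
have sTH : T \subset H := subset_trans sTM1 sM1H.
have sNTH : NT \subset H by rewrite join_subG sNH.
have nNTH : H \subset 'N(NT).
  apply: normH; first by rewrite normsY.
  exact: subset_trans (joing_subl N T) (normG NT).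
pose M2' := (M2 :&: NT)%G.
have eM2N : M2' * N = NT.
  by rewrite /= setIC group_modr ?joing_subl // eH2; apply/setIidPl.
have tM2'N : M2' :&: N = 1.
  by apply/trivgP; rewrite -tM2 setSI // subsetIl.
have cM2' : #|M2'| = #|T|.
  have := TI_cardMg tM2'N; rewrite eM2N cNT2 mulnC => e.
  by apply/eqP; rewrite -(eqn_pmul2r (cardG_gt0 N)) e.
have sDM2 : D \subset M2 by rewrite /= eD subsetIl.
have sDM2' : D \subset M2' by rewrite subsetI sDM2 (subset_trans sDT) ?joing_subr.
have sM2'H : M2' \subset H := subset_trans (subsetIl _ _) sM2H.
have nDM2' : M2' \subset 'N(D) := subset_trans sM2'H nDH.
have qM2'D : q.-nat #|M2' : D| by rewrite -divgS // cM2' divgS.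
have [S2 sylS2] := Sylow_exists q M2'.
have sS2M2' := pHall_sub sylS2.
have eM2'S2 : D <*> S2 = M2' :=
  join_Sylow sDM2' (subset_trans sS2M2' nDM2') sylS2 qM2'D.
have sylS_NT : q.-Sylow(NT) S.
  apply/and3P; split; first exact: subset_trans sST (joing_subr _ _).
    exact: pHall_pgroup sylS.
  rewrite -(Lagrange_index (joing_subr N T) sST) pnatM.
  have /and3P[_ _ ->] := sylS; rewrite andbT -divgS ?joing_subr // cNT2 mulnK //.
  by apply: pnat_neq (pN); rewrite eq_sym.
have sS2NT : S2 \subset NT := subset_trans sS2M2' (subsetIr _ _).
have [x NTx sx] := Sylow_Jsub sylS_NT sS2NT (pHall_pgroup sylS2).
have eS2x : S2 :^ x = S.
  apply/eqP; rewrite eqEcard sx cardJg (card_Hall sylS) (card_Hall sylS2).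
  by rewrite /= cM2'.
have : x \in N * T by rewrite -eNT.
case/mulsgP=> n t Nn Tt ex.
have Hn : n \in H := subsetP sNH n Nn.
have Ht : t \in H := subsetP sTH t Tt.
have eS2n : S2 :^ n = S :^ t^-1.
  by rewrite -eS2x ex conjsgM conjsgK.
have eTn : T :=: M2 :^ n :&: NT.
  have NTn : n \in NT by rewrite (subsetP (joing_subl N T)).
  rewrite -(conjGid NTn) -conjIg -/M2' -eM2'S2 conjYg eS2n.
  rewrite (normsP nDH n Hn) -{1}(normsP nDH t^-1 (groupVr Ht)) -conjYg eTS.
  by rewrite conjGid // groupV.
have sM2nH : M2 :^ n \subset H by rewrite -(conjGid Hn) conjSg.
have nTM2n : M2 :^ n \subset 'N(T).
  by rewrite eTn normsI ?normG // (subset_trans sM2nH).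
pose X := (H :&: 'N(T))%G.
have sM1X : M1 \subset X by rewrite subsetI sM1H.
have tXN : X :&: N = 1.
  have c : N :&: 'N(T) \subset 'C(T).
    apply/commG1P/trivgP; rewrite -tNT.
    by apply: commg_subI; rewrite ?subxx // subsetI subxx.
  apply/trivgP; rewrite -cNT subsetI subsetIr /=.
  apply: subset_trans c; rewrite subsetI subsetIr /=.
  by apply: subset_trans (subsetIl _ _) (subsetIr _ _).
have leX : #|X| <= #|M1|.
  have : X * N \subset H by rewrite mulG_subG subsetIl sNH.
  move/subset_leq_card; rewrite TI_cardMg // -cM1 leq_pmul2r // cardG_gt0.
have eX : X :=: M1.
  by apply/eqP; rewrite eq_sym eqEcard sM1X leX.
have sM2n : M2 :^ n \subset M1 by rewrite -eX subsetI sM2nH.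
have eM2n : M2 :^ n = M1.
  apply/eqP; rewrite eqEcard sM2n cardJg.
  by rewrite /= -(leq_pmul2r (cardG_gt0 N)) cM1 cM2.
exists n^-1; first by rewrite groupV.
by rewrite -eM2n conjsgK.
Qed.


End Fiber.


Lemma ord2_central (gT : finGroupType) (H N : {group gT}) :
  H \subset 'N(N) -> #|N| = 2 -> H \subset 'C(N).
Proof.
move=> nNH cN.
have pr : prime #|N| by rewrite cN.
have [z eN] := cyclicP (prime_cyclic pr).
have oz : #[z] = 2 by rewrite -cN eN.
rewrite eN cent_cycle; apply/subsetP=> h Hh.
have Nzh : z ^ h \in <[z]>.
  by rewrite memJ_norm ?cycle_id // -eN (subsetP nNH).
case/cycleP: Nzh => i e; rewrite -expg_mod_order oz in e.
have : i %% 2 < 2 by rewrite ltn_pmod.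
case: (i %% 2) e => [|[|//]] e _.
  by move/eqP: e; rewrite expg0 conjg_eq1 -order_eq1 oz.
apply/cent1P; rewrite expg1 in e.
by rewrite /commute -{1}e conjgE mulKVg.
Qed.

Lemma arith3 a k n q : (0 < q -> a <= k * n -> 2 * k <= q -> 2 < n -> a < q * (n - 1))%N.
Proof.
move=> h0 h1 h2 h3.
have h4 : (2 * k * n <= q * n)%N by rewrite leq_mul2r h2 orbT.
have h5 : (q * 3 <= q * n)%N by rewrite leq_mul2l h3 orbT.
rewrite mulnBr muln1. rewrite -mulnA in h4. lia.
Qed.
Lemma arith4 a q n : (a <= q -> 1 < n -> a <= q * (n - 1))%N.
Proof. move=> h1 h2. have : (q * 1 <= q * (n - 1))%N by rewrite leq_mul2l; apply/orP; right; lia. lia. Qed.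
Lemma arith4b a q n : (a <= q -> 1 < n -> a = q * (n - 1) -> 0 < q -> n = 2)%N.
Proof. move=> h1 h2 h3 h4. have : (q * (n - 1) <= q * 1)%N by lia. rewrite leq_mul2l. case/orP; lia. Qed.
Lemma arith5 q n : (0 < q -> 1 < n -> 0 = q * (n - 1) -> False)%N.
Proof. move=> h1 h2 /esym /eqP; rewrite muln_eq0; lia. Qed.

Section Compl.
Variables (gT : finGroupType) (H N : {group gT}).
Hypotheses (mnN : minnormal N H) (sNH : N \subset H) (abN : abelian N).

Lemma nNHs : H \subset 'N(N).
Proof. by case/mingroupP: mnN => /andP[]. Qed.

Lemma compl_of_max (M : {group gT}) : maximal M H -> ~~ (N \subset M) ->
  [/\ M \subset H, M :&: N = 1 & (#|M| * #|N|)%N = #|H|].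
Proof.
move=> mM nsNM; have sMH := proper_sub (maximal_proper mM).
have nNM : M \subset 'N(N) := subset_trans sMH nNHs.
have eMN : M <*> N = H.
  have sMNH : M <*> N \subset H by rewrite join_subG sMH sNH.
  have [e | //] := maxI mM (joing_subl M N) sMNH.
  by move: nsNM; rewrite -e joing_subr.
have tMN : M :&: N = 1.
  have n1 : H \subset 'N(M :&: N).
    rewrite -eMN join_subG normsI ?normG //=.
    apply: subset_trans (cent_sub _).
    by rewrite centsC; apply: subset_trans (subsetIr _ _) abN.
  have [e | e] := mn_min' mnN (subsetIr M N) n1; first by [].
  by move: nsNM; rewrite -e subsetIl.
split=> //.
by rewrite -TI_cardMg // -norm_joinEl // eMN.
Qed.

Lemma complC_normal (M : {group gT}) :
  M \subset H -> M :&: N = 1 -> (#|M| * #|N|)%N = #|H| ->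
  (M :&: 'C(N)) <| H.
Proof.
move=> sMH tMN cMN.
have eH : M * N = H.
  apply/eqP; rewrite eqEcard mulG_subG sMH sNH /=.
  by rewrite TI_cardMg // cMN.
have nNM : M \subset 'N(N) := subset_trans sMH nNHs.
rewrite /normal subIset ?sMH //= -eH mulG_subG normsI ?normG ?norms_cent //=.
apply: subset_trans (cent_sub _).
by rewrite centsC subsetIr.
Qed.

Lemma compl_NC (M : {group gT}) :
  M \subset H -> M :&: N = 1 -> (#|M| * #|N|)%N = #|H| ->
  N * (M :&: 'C(N)) = H :&: 'C(N).
Proof.
move=> sMH tMN cMN.
have eH : N * M = H.
  apply/eqP; rewrite eqEcard mulG_subG sMH sNH /=.
  have tNM : N :&: M = 1 by rewrite setIC.
  by rewrite TI_cardMg // mulnC cMN.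
by rewrite group_modl // eH.
Qed.

End Compl.

Section A2.
Variables (gT : finGroupType) (H N : {group gT}) (p : nat).
Hypotheses (solH : solvable H) (mnN : minnormal N H) (sNH : N \subset H).
Hypotheses (pr_p : prime p) (abelN : p.-abelem N).

Lemma A2_bound :
  let A2 := [set M in mx H | ~~ (N \subset M)] in
  #|A2| <= #|H : N| * (#|N| - 1) /\
  (#|A2| = (#|H : N| * (#|N| - 1))%N -> #|N| = 2 /\
     exists M0 : {group gT},
       [/\ M0 \subset H, M0 :&: N = 1 & (#|M0| * #|N|)%N = #|H|]).
Proof.
move=> A2.
have abN := abelem_abelian abelN.
have ntN : N :!=: 1 by case/mingroupP: mnN => /andP[].
have gt1N : 1 < #|N| by rewrite cardG_gt1.
have q0 : 0 < #|H : N| := indexg_gt0 H N.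
have LN := Lagrange sNH.
have nNH := nNHs mnN.
have cA2 : forall M, M \in A2 ->
    [/\ M \subset H, M :&: N = 1 & (#|M| * #|N|)%N = #|H|].
  by move=> M; rewrite !inE => /andP[mM nM]; apply: compl_of_max.
have [A0 | /set0Pn [M0 A2M0]] := eqVneq A2 set0.
  rewrite A0 cards0; split=> // e; exfalso; exact: arith5 q0 gt1N e.
have [sM0H tM0 cM0] := cA2 M0 A2M0.
have eqM : #|M0| = #|H : N|.
  by apply/eqP; rewrite -(eqn_pmul2r (cardG_gt0 N)) cM0 -LN mulnC.
pose K0 := (M0 :&: 'C(N))%G.
have nK0 : K0 <| H := complC_normal mnN sNH sM0H tM0 cM0.
have sK0C : K0 \subset 'C(N) := subsetIr _ _.
have tNK0 : N :&: K0 = 1.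
  by apply/trivgP; rewrite -tM0 /= setIC setSI // subsetIl.
have eNK0 : N <*> K0 = N * K0 by rewrite cent_joinEr.
have eK0 := compl_NC sNH abN sM0H tM0 cM0.
have Scnt : #|S H N 1 K0| <= #|K0|.
  rewrite -(indexg1 K0).
  apply: (S_count mnN abN sNH (n := #|K0|.+1)) => //.
  - by rewrite ltnS leq_subr.
  - exact: normal1.
  - exact: sub1G.
pose Phi (M : {group gT}) := (M :&: 'C(N))%G.
have PhiS : forall M, M \in A2 -> Phi M \in S H N 1 K0.
  move=> M A2M; have [sMH tMN cMN] := cA2 M A2M.
  have eM := compl_NC sNH abN sMH tMN cMN.
  have tD : (M :&: 'C(N)) :&: N = 1.
    by apply/trivgP; rewrite -tMN setSI // subsetIl.
  rewrite inE complC_normal //= sub1G eNK0 eK0 -eM mulG_subr tD eqxx /=.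
  have e1 := TI_cardMg (etrans (setIC _ _) tD).
  have e2 := TI_cardMg tNK0.
  rewrite eM -eK0 e2 in e1.
  by rewrite -(eqn_pmul2l (cardG_gt0 N)) e1.
have Hsum : forall fb, (forall D, D \in S H N 1 K0 ->
      #|[set M in A2 | Phi M == D]| <= fb) ->
    #|A2| <= #|K0| * fb.
  move=> fb hfb.
  rewrite -sum1_card (partition_big Phi (fun j => j \in S H N 1 K0)) //=.
  apply: leq_trans (_ : \sum_(j in S H N 1 K0) fb <= _).
    apply: leq_sum => D SD; rewrite sum1dep_card.
    apply: leq_trans (hfb D SD); apply: subset_leq_card.
    by apply/subsetP=> M; rewrite !inE.
  by rewrite sum_nat_const leq_mul2r Scnt orbT.
have [cHN | ncHN] := boolP (H \subset 'C(N)).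
  have eK0M0 : K0 :=: M0 by apply/setIidPl; apply: subset_trans sM0H cHN.
  have le : #|A2| <= #|K0| * 1.
    apply: Hsum => D SD; rewrite -(cards1 D); apply: subset_leq_card.
    apply/subsetP=> M; rewrite inE => /andP[A2M /eqP <-]; rewrite inE.
    have [sMH _ _] := cA2 M A2M.
    apply/eqP; apply: val_inj => /=; apply/esym/setIidPl.
    exact: subset_trans sMH cHN.
  rewrite muln1 eK0M0 eqM in le.
  split; first exact: arith4 le gt1N.
  move=> e; split; first exact: arith4b le gt1N e q0.
  by exists M0.
have le : #|A2| <= #|K0| * #|N|.
  apply: Hsum => D SD.
  set F := [set _ in _ | _].
  have [-> | ] := eqVneq F set0; first by rewrite cards0.
  case/set0Pn=> M1; rewrite /F inE => /andP[A2M1 /eqP pM1].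
  have [sM1H tM1 cM1] := cA2 M1 A2M1.
  apply: leq_trans (leq_imset_card (fun n => (M1 :^ n)%G) N).
  apply: subset_leq_card; apply/subsetP=> M2; rewrite inE => /andP[A2M2 /eqP pM2].
  have [sM2H tM2 cM2] := cA2 M2 A2M2.
  have eD : M1 :&: 'C(N) = M2 :&: 'C(N).
    by have := congr1 val (etrans pM1 (esym pM2)).
  have [n Nn e] := fiberC solH mnN sNH abelN ncHN sM1H tM1 cM1 sM2H tM2 cM2 eD.
  apply/imsetP; exists n => //; exact: val_inj.
have pK0 : 2 * #|K0| <= #|H : N|.
  rewrite -eqM -(Lagrange (subsetIl M0 'C(N))) mulnC leq_mul2l.
  rewrite indexg_gt1; apply/orP; right.
  apply: contra ncHN => sM0K0.
  have sM0C : M0 \subset 'C(N) := subset_trans sM0K0 sK0C.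
  have eH : M0 * N = H.
    apply/eqP; rewrite eqEcard mulG_subG sM0H sNH /=.
    by rewrite TI_cardMg // cM0.
  by rewrite -eH mulG_subG sM0C.
have n2 : 2 < #|N|.
  rewrite ltn_neqAle gt1N andbT; apply/negP => /eqP e.
  by move: ncHN; rewrite (ord2_central nNH (esym e)).
have lt := arith3 q0 le pK0 n2.
split; first exact: ltnW.
by move=> e; move: lt; rewrite e ltnn.
Qed.

End A2.

Lemma arith6 a1 a2 m q nn : (a1 <= m -> m <= q - 1 -> a2 <= q * (nn - 1) -> 0 < q -> 0 < nn -> a1 + a2 <= nn * q - 1)%N.
Proof. move=> h1 h2 h3 h4 h5; rewrite mulnBr muln1 in h3; rewrite mulnC.
have : (q <= q * nn)%N by rewrite leq_pmulr. lia. Qed.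
Lemma arith7 a1 a2 m q nn : (a1 <= m -> m <= q - 1 -> a2 <= q * (nn - 1) -> 0 < q -> 0 < nn -> a1 + a2 = nn * q - 1 -> m = q - 1 /\ a2 = q * (nn - 1))%N.
Proof. move=> h1 h2 h3 h4 h5 h6; rewrite mulnBr muln1 in h3 *; rewrite mulnC in h6.
have : (q <= q * nn)%N by rewrite leq_pmulr. lia. Qed.
Lemma arith8 x h i : (x * h <= h * i - h -> 0 < h -> x <= i - 1)%N.
Proof. move=> a b; have e : (h * i - h = (i - 1) * h)%N by rewrite mulnBl mul1n mulnC.
by rewrite e leq_pmul2r // in a. Qed.

Theorem wall n : forall (gT : finGroupType) (H : {group gT}), #|H| < n ->
  solvable H -> #|mx H| <= #|H| - 1 /\ (#|mx H| = #|H| - 1 -> 2.-abelem H).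
Proof.
elim: n => // n IH gT H ltH solH.
have [H1 | ntH] := eqsVneq H 1.
  have e0 : mx H = set0.
    apply/setP=> M; rewrite inE in_set0; apply/negP => /maximal_proper/proper_card.
    by rewrite H1 cards1 ltnNge cardG_gt0.
  rewrite e0 cards0 H1 cards1; split=> // _; exact: abelem1.
have [N mnN sNH] := minnormal_exists ntH (normG H).
have [nNH ntN abN'] := minnormal_solvable mnN sNH solH.
have [p pr_p abelN] := is_abelemP abN'.
have nsNH : N <| H by rewrite /normal sNH.
have ltQ : #|H / N| < n := leq_trans (ltn_quotient ntN sNH) (ltnSE ltH).
have [IHb IHe] := IH _ (H / N)%G ltQ (quotient_sol N solH).
have cQ : #|H / N| = #|H : N| := card_quotient nNH.
pose A1 := [set M in mx H | N \subset M].
pose A2 := [set M in mx H | ~~ (N \subset M)].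
have eA : #|mx H| = #|A1| + #|A2|.
  rewrite -(cardsID [set M : {group gT} | N \subset M] (mx H)).
  have -> : A1 = mx H :&: [set M : {group gT} | N \subset M].
    by apply/setP=> M; rewrite !inE.
  have -> : A2 = mx H :\: [set M : {group gT} | N \subset M].
    by apply/setP=> M; rewrite !inE andbC.
  by [].
have le1 : #|A1| <= #|mx (H / N)|.
  have inj : {in A1 &, injective (fun M : {group gT} => (M / N)%G)}.
    move=> M1 M2; rewrite !inE => /andP[/maximal_proper/proper_sub s1 n1]
      /andP[/maximal_proper/proper_sub s2 n2] e.
    apply: val_inj => /=; apply: (quotient_inj (normalS n1 s1 nsNH) (normalS n2 s2 nsNH)).
    by have := congr1 val e.
  rewrite -(card_in_imset inj); apply: subset_leq_card.
  apply/subsetP=> K /imsetP[M A1M ->]; move: A1M; rewrite !inE => /andP[mM nM].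
  by rewrite quotient_maximal // (normalS nM (proper_sub (maximal_proper mM)) nsNH).
have [le2 eq2] := A2_bound solH mnN sNH abelN.
have LN := Lagrange sNH.
have q0 := indexg_gt0 H N.
have n0 := cardG_gt0 N.
have mq : #|mx (H / N)| <= #|H : N| - 1 by rewrite -cQ.
rewrite eA -LN; split; first exact: arith6 le1 mq le2 q0 n0.
move=> e.
have [e1 e2] := arith7 le1 mq le2 q0 n0 e.
have abQ : 2.-abelem (H / N) by apply: IHe; rewrite cQ.
have [eN2 [M0 [sM0H tM0 cM0]]] := eq2 e2.
have cent := ord2_central nNH eN2.
have eH : M0 * N = H.
  apply/eqP; rewrite eqEcard mulG_subG sM0H sNH /=.
  by rewrite TI_cardMg // cM0.
have [_ expQ] := abelemP (isT : prime 2) abQ.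
apply: exponent2_abelem; apply/exponentP=> x; rewrite -eH => /mulsgP[m n' Mm Nn ->].
have Hm : m \in H := subsetP sM0H m Mm.
have c : commute m n'.
  by have := centP (subsetP cent m Hm) n' Nn.
rewrite expgMn // -{2}eN2 expg_cardG // mulg1.
have Nm2 : m ^+ 2 \in N.
  apply: coset_idr; first by rewrite groupX // (subsetP nNH).
  rewrite morphX ?(subsetP nNH) //= expQ //.
  exact: mem_quotient.
have : m ^+ 2 \in M0 :&: N by rewrite inE groupX // Nm2.
by rewrite tM0 => /set1P.
Qed.


Lemma arith9 m x h i : (m <= h - 1 -> x <= i - 1 -> 0 < h -> 0 < i ->
  m + x <= h + i - 2 /\ (m + x = h + i - 2 <-> m = h - 1 /\ x = i - 1))%N.
Proof. move=> *; split; [lia | split; lia]. Qed.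


End Aux.
Import Aux.
Unset Implicit Arguments.

Theorem lemma2p1 (gT : finGroupType) (G H : {group gT})
    (solG : solvable G) (sHG : H \subset G) :
  (subgraph_deg G H <= #|H| + #|G| %/ #|H| - 2)%N /\
  (subgraph_deg G H = (#|H| + #|G| %/ #|H| - 2)%N <->
     [/\ H <| G, 2.-abelem H & 2.-abelem (G / H)]).
Proof.
have solH := solvableS sHG solG.
have [wb we] := wall (ltnSn #|H|) solH.
have cl := covers_le sHG.
have LG := Lagrange sHG.
have h0 := cardG_gt0 H; have i0 := indexg_gt0 G H.
have cb : #|[set K : {group gT} | (K \subset G) && maximal H K]| <= #|G : H| - 1.
  by apply: arith8 _ h0; rewrite LG.
rewrite /subgraph_deg -/(mx H) divgS //.
have [le eq] := arith9 wb cb h0 i0.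
split=> //; rewrite eq; split.
  case=> e1 e2; have [nHG abQ] := (covers_eq sHG).1 e2.
  by split=> //; apply: we.
case=> nHG abH abQ; split.
  apply/eqP; rewrite eqn_leq wb /=.
  exact: abelem2_lower (ltnSn _) abH.
exact: (covers_eq sHG).2.
Qed.
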